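(* Every $SC^*$-compact Hausdorff space is an $SC^*$-$T_3$ space, and consequently an $SC^*$-regular space.
   Context: For $A\subseteq X$ in a topological space $X$: $A$ is semi-open if $A\subseteq cl(int(A))$, semi-closed if its complement is semi-open; $scl(A)$ is the smallest semi-closed set containing $A$. $A$ is $c^*$-open if $int(cl(A))\subseteq A\subseteq cl(int(A))$. $A$ is $SC^*$-closed if $scl(A)\subseteq U$ whenever $A\subseteq U$ and $U$ is $c^*$-open; $A$ is $SC^*$-open if $X\setminus A$ is $SC^*$-closed. $X$ is $SC^*$-compact if every cover of $X$ by $SC^*$-open sets has a finite subcover. $X$ is $SC^*$-regular if for every closed set $F$ and every point $x\notin F$ there exist disjoint $SC^*$-open sets $U,V$ with $F\subseteq U$ and $x\in V$. $X$ is $SC^*$-$T_1$ if for any distinct $x,y$ there are $SC^*$-open sets $U,V$ with $x\in U$, $y\notin U$, $y\in V$, $x\notin V$; $X$ is $SC^*$-$T_3$ if it is both $SC^*$-regular and $SC^*$-$T_1$. *)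

(* Defs.v *)
From HB Require Import structures.
From mathcomp Require Import all_boot all_order.
From mathcomp Require Import all_classical topology.
Set Implicit Arguments. Unset Strict Implicit. Unset Printing Implicit Defensive.
Local Open Scope classical_set_scope.

Section SCstar.
Variable T : topologicalType.

Definition semi_open (A : set T) : Prop := A `<=` closure (interior A).
Definition semi_closed (A : set T) : Prop := semi_open (~` A).
Definition scl (A : set T) : set T :=
  \bigcap_(F in [set F | semi_closed F /\ A `<=` F]) F.
Definition cstar_open (A : set T) : Prop :=
  interior (closure A) `<=` A /\ A `<=` closure (interior A).
Definition SCstar_closed (A : set T) : Prop :=
  forall U : set T, A `<=` U -> cstar_open U -> scl A `<=` U.
Definition SCstar_open (A : set T) : Prop := SCstar_closed (~` A).

Definition SCstar_compact : Prop :=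
  forall (I : Type) (G : I -> set T),
    (forall i, SCstar_open (G i)) -> \bigcup_(i in [set: I]) G i = [set: T] ->
    exists2 D : set I, finite_set D & \bigcup_(i in D) G i = [set: T].

Definition SCstar_regular : Prop :=
  forall (F : set T) (x : T), closed F -> ~ F x ->
    exists U V : set T, [/\ SCstar_open U, SCstar_open V, F `<=` U, V x &
                          U `&` V = set0].

Definition SCstar_T1 : Prop :=
  forall x y : T, x <> y ->
    exists U V : set T, [/\ SCstar_open U, SCstar_open V,
                          U x /\ ~ U y & V y /\ ~ V x].

Definition SCstar_T3 : Prop := SCstar_regular /\ SCstar_T1.
End SCstar.

(* Main.v *)
Require Import Defs.
From HB Require Import structures.
From mathcomp Require Import all_boot all_order.
From mathcomp Require Import all_classical topology.
Local Open Scope classical_set_scope.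

Lemma closed_SCc (T : topologicalType) (A : set T) : closed A -> SCstar_closed A.
Proof.
move=> cA U AU _ x sclx; apply: AU; apply: sclx; split=> //.
rewrite /semi_closed /semi_open.
have oA : open (~` A) by exact: closed_openC.
move=> y Ay; apply: subset_closure.
by move: oA => /interior_id ->.
Qed.

Lemma open_SCo (T : topologicalType) (A : set T) : open A -> SCstar_open A.
Proof. by move=> oA; apply: closed_SCc; exact: open_closedC. Qed.

Section PT.
Variables (T : topologicalType) (x0 : T).
Definition PT : Type := T.
HB.instance Definition _ := Topological.on PT.
HB.instance Definition _ := isPointed.Build PT x0.
Lemma cover_compact_compact (A : set T) : cover_compact A -> compact A.
Proof.
move=> cA; have : @compact PT A by rewrite compact_cover; exact: cA.
exact.
Qed.
End PT.

Theorem theorem2p15 (T : topologicalType) :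
  SCstar_compact T -> hausdorff_space T -> SCstar_T3 T /\ SCstar_regular T.
Proof.
move=> sc hT.
have cpt : cover_compact [set: T].
  move=> I D f fo cov.
  pose G i := if pselect (D i) then f i else set0.
  have GO i : SCstar_open (G i).
    rewrite /G; case: pselect => Di; first by apply: open_SCo; exact: fo.
    by apply: open_SCo; exact: open0.
  have GU : \bigcup_(i in [set: I]) G i = [set: T].
    apply/seteqP; split => // x _.
    have [i Di fxi] := cov x Logic.I.
    by exists i => //; rewrite /G; case: pselect.
  have [D0 fD0 D0U] := sc I G GO GU.
  have fD0D : finite_set (D0 `&` D) by exact: finite_setIl.
  exists (fset_set (D0 `&` D)).
    move=> i; rewrite in_fset_set // inE => -[] _ Di; by rewrite inE.
  move=> x _; have : [set: T] x by [].
  rewrite -D0U => -[i D0i]; rewrite /G; case: pselect => // Di fxi.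
  by exists i => //=; rewrite in_fset_set // inE.
have reg : SCstar_regular T.
  move=> F x cF nFx.
  have := @compact_regular T x setT hT (@cover_compact_compact T x _ cpt) filterT (~` F).
  case.
    by apply: open_nbhs_nbhs; split => //; exact: closed_openC.
  move=> W Wx clW.
  exists (~` closure W), (interior W); split.
  - by apply: open_SCo; apply: closed_openC; exact: closed_closure.
  - by apply: open_SCo; exact: open_interior.
  - by move=> y Fy cy; exact: (clW y cy Fy).
  - exact: Wx.
  - apply/seteqP; split => // y [] + /interior_subset Wy; apply.
    exact: subset_closure.
split => //; split => // x y xy.
move: hT; rewrite open_hausdorff => /(_ x y).
case; first by apply/eqP.
move=> [A B] /= [xA yB] [oA oB /eqP AB0].
exists A, B; split; try exact: open_SCo.
- split; first by rewrite inE in xA.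
  move=> Ay; have : (A `&` B) y by split => //; rewrite inE in yB.
  by rewrite AB0.
- split; first by rewrite inE in yB.
  move=> Bx; have : (A `&` B) x by split => //; rewrite inE in xA.
  by rewrite AB0.
Qed.
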